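(* The logics $\mathrm{E4}$, $\mathrm{S04}$ and $\mathrm{EMC4}$ have the finite model property, i.e. for each of them there is a class of finite neighborhood frames such that the theorems of the logic are exactly the formulas valid on all frames of that class.
   Context: Modal formulas are built from a countable set $Var$ of propositional variables using $\neg$, $\wedge$ and the unary operator $\Box$. A (modal) logic is a set of formulas containing all classical tautologies and closed under modus ponens, uniform substitution, and the rule (RE): from $\varphi\leftrightarrow\psi$ infer $\Box\varphi\leftrightarrow\Box\psi$. $\mathrm{E}$ is the smallest logic; $\mathrm{L}+\Gamma$ is the smallest logic containing $\mathrm{L}\cup\Gamma$. Axioms: $(4)\ \Box p\to\Box\Box p$; $(\mathrm{T})\ \Box p\to p$; $(\mathrm{M})\ \Box(p\wedge q)\to(\Box p\wedge\Box q)$; $(\mathrm{C})\ (\Box p\wedge\Box q)\to\Box(p\wedge q)$. $\mathrm{E4}=\mathrm{E}+4$, $\mathrm{EMC4}=\mathrm{E4}+\mathrm{M}+\mathrm{C}$, $\mathrm{S04}=\mathrm{E4}+\mathrm{T}+\mathrm{M}$. A neighborhood frame is a pair $(W,\bm{\Box})$ with $W\neq\varnothing$ and $\bm{\Box}:\mathcal P(W)\to\mathcal P(W)$; it is finite if $W$ is finite. A model on it adds a valuation $V:Var\to\mathcal P(W)$. Truth sets: $|p|_M=V(p)$, $|\neg\varphi|_M=W\setminus|\varphi|_M$, $|\varphi\wedge\psi|_M=|\varphi|_M\cap|\psi|_M$, $|\Box\varphi|_M=\bm{\Box}|\varphi|_M$. $\varphi$ is valid on a frame if $|\varphi|_M=W$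 for every model $M$ on it. *)

(* Defs.v *)
From mathcomp Require Import all_boot.
Set Implicit Arguments. Unset Strict Implicit. Unset Printing Implicit Defensive.

Inductive form : Type :=
| Var : nat -> form
| Neg : form -> form
| And : form -> form -> form
| Box : form -> form.

Definition Or (a b : form) := Neg (And (Neg a) (Neg b)).
Definition Imp (a b : form) := Neg (And a (Neg b)).
Definition Iff (a b : form) := And (Imp a b) (Imp b a).

(* Classical tautologies: formulas true under every Boolean valuation of
   the propositional variables and of the boxed subformulas (treated as atoms). *)
Fixpoint beval (v : nat -> bool) (vb : form -> bool) (f : form) : bool :=
  match f with
  | Var n => v n
  | Neg a => ~~ beval v vb a
  | And a b => beval v vb a && beval v vb b
  | Box a => vb a
  end.

Definition tautology (f : form) : Prop :=
  forall (v : nat -> bool) (vb : form -> bool), beval v vb f = true.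

Fixpoint subst (s : nat -> form) (f : form) : form :=
  match f with
  | Var n => s n
  | Neg a => Neg (subst s a)
  | And a b => And (subst s a) (subst s b)
  | Box a => Box (subst s a)
  end.

Inductive derivable (G : form -> Prop) : form -> Prop :=
| d_taut f : tautology f -> derivable G f
| d_ax f : G f -> derivable G f
| d_mp f g : derivable G f -> derivable G (Imp f g) -> derivable G g
| d_us s f : derivable G f -> derivable G (subst s f)
| d_re f g : derivable G (Iff f g) -> derivable G (Iff (Box f) (Box g)).

Definition lplus (L G : form -> Prop) : form -> Prop :=
  derivable (fun f => L f \/ G f).

Definition p := Var 0.
Definition q := Var 1.
Definition ax4 := Imp (Box p) (Box (Box p)).
Definition axT := Imp (Box p) p.
Definition axM := Imp (Box (And p q)) (And (Box p) (Box q)).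
Definition axC := Imp (And (Box p) (Box q)) (Box (And p q)).

Definition E : form -> Prop := derivable (fun _ => False).
Definition E4 : form -> Prop := lplus E (fun f => f = ax4).
Definition EMC4 : form -> Prop := lplus E4 (fun f => f = axM \/ f = axC).
Definition S04 : form -> Prop := lplus E4 (fun f => f = axT \/ f = axM).

Record finframe := FinFrame {
  fW : finType;
  fbox : {set fW} -> {set fW};
  fW_nonempty : 0 < #|fW|
}.

Fixpoint truth (F : finframe) (V : nat -> {set fW F}) (f : form) : {set fW F} :=
  match f with
  | Var n => V n
  | Neg a => ~: truth V a
  | And a b => truth V a :&: truth V b
  | Box a => fbox (truth V a)
  end.

Definition valid (F : finframe) (f : form) : Prop :=
  forall V : nat -> {set fW F}, truth V f = [set: fW F].

Definition fmp (L : form -> Prop) : Prop :=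
  exists C : finframe -> Prop,
    forall f, L f <-> (forall F : finframe, C F -> valid F f).

(* Main.v *)
From HB Require Import structures.
Require Import Defs.
From mathcomp Require Import all_boot.
From Stdlib Require Import Classical ClassicalEpsilon.
Set Implicit Arguments. Unset Strict Implicit. Unset Printing Implicit Defensive.

Fixpoint form_eqb (a b : form) : bool :=
  match a, b with
  | Var n, Var m => n == m
  | Neg a, Neg b => form_eqb a b
  | And a1 a2, And b1 b2 => form_eqb a1 b1 && form_eqb a2 b2
  | Box a, Box b => form_eqb a b
  | _, _ => false
  end.

Lemma form_eqP : Equality.axiom form_eqb.
Proof.
elim=> [n|a IH|a1 IH1 a2 IH2|a IH] [m|b|b1 b2|b] /=; try by constructor.
- by apply: (iffP eqP) => [->|[]].
- by apply: (iffP (IH b)) => [->|[]].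
- case: (IH1 b1) => [->|h]; last by constructor => -[].
  case: (IH2 b2) => [->|h]; last by constructor => -[].
  by constructor.
- by apply: (iffP (IH b)) => [->|[]].
Qed.

HB.instance Definition _ := hasDecEq.Build form form_eqP.

Definition Top := Imp p p.

Ltac taut := let v := fresh "v" in let vb := fresh "vb" in
  intros v vb; rewrite /Top /Iff /Imp /p /=;
  repeat match goal with
         | |- context [beval v vb ?a] => destruct (beval v vb a)
         | |- context [vb ?a] => destruct (vb a)
         | |- context [v ?a] => destruct (v a)
         end; reflexivity.

Fixpoint bigAnd (l : seq form) : form := if l is x :: l' then And x (bigAnd l') else Top.

Lemma beval_bigAnd v vb l : beval v vb (bigAnd l) = all (beval v vb) l.
Proof. by elim: l => [|x l IH] /=; [case: (v 0)|rewrite IH]. Qed.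

Section Deriv.
Variable G : form -> Prop.
Local Notation D := (derivable G).

Lemma taut1 x y : tautology (Imp x y) -> D x -> D y.
Proof. by move=> t dx; exact: d_mp dx (d_taut _ t). Qed.
Lemma taut2 x y z : tautology (Imp x (Imp y z)) -> D x -> D y -> D z.
Proof. by move=> t dx dy; apply: d_mp dy _; exact: d_mp dx (d_taut _ t). Qed.
Lemma taut3 x y z w : tautology (Imp x (Imp y (Imp z w))) -> D x -> D y -> D z -> D w.
Proof. by move=> t dx dy dz; apply: d_mp dz _; apply: d_mp dy _; exact: d_mp dx (d_taut _ t). Qed.

Lemma DTop : D Top. Proof. by apply: d_taut; taut. Qed.

Lemma D_bigAnd l : (forall x, x \in l -> D x) -> D (bigAnd l).
Proof.
elim: l => [|x l IH] h /=; first exact: DTop.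
apply: (taut2 (x:=x) (y:=bigAnd l)); first by taut.
- by apply: h; rewrite inE eqxx.
- by apply: IH => y yl; apply: h; rewrite inE yl orbT.
Qed.

Lemma Dtrans a b c : D (Imp a b) -> D (Imp b c) -> D (Imp a c).
Proof. by apply: taut2; taut. Qed.

Lemma Dimp_refl a : D (Imp a a).
Proof. by apply: d_taut; taut. Qed.

Lemma D4 : D ax4 -> forall a, D (Imp (Box a) (Box (Box a))).
Proof. by move=> h a; exact: (d_us (fun _ => a) h). Qed.
Lemma DT : D axT -> forall a, D (Imp (Box a) a).
Proof. by move=> h a; exact: (d_us (fun _ => a) h). Qed.
Lemma DM : D axM -> forall a b, D (Imp (Box (And a b)) (And (Box a) (Box b))).
Proof. by move=> h a b; exact: (d_us (fun k => if k is 0 then a else b) h). Qed.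
Lemma DC : D axC -> forall a b, D (Imp (And (Box a) (Box b)) (Box (And a b))).
Proof. by move=> h a b; exact: (d_us (fun k => if k is 0 then a else b) h). Qed.

Lemma Dmono : D axM -> forall a b, D (Imp a b) -> D (Imp (Box a) (Box b)).
Proof.
move=> hM a b h.
have h1 : D (Iff a (And a b)) by apply: taut1 h; taut.
have h2 := d_re h1.
apply: (taut2 _ h2 (DM hM a b)); taut.
Qed.

End Deriv.

Lemma in_truth (F : finframe) (V : nat -> {set fW F}) x a :
  (x \in truth V a) = beval (fun k => x \in V k) (fun b => x \in fbox (truth V b)) a.
Proof. by elim: a => [k|a IH|a IHa b IHb|a IH] //=; rewrite !inE ?IH ?IHa ?IHb. Qed.

Lemma truth_subst (F : finframe) (V : nat -> {set fW F}) s a :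
  truth V (subst s a) = truth (fun k => truth V (s k)) a.
Proof. by elim: a => [k|a IH|a IHa b IHb|a IH] //=; rewrite ?IH ?IHa ?IHb. Qed.

Lemma valid_pt (F : finframe) a :
  valid F a <-> forall (V : nat -> {set fW F}) x, x \in truth V a.
Proof.
split=> [h V x|h V]; first by rewrite h inE.
by apply/setP => x; rewrite inE h.
Qed.

Lemma sound (F : finframe) (G : form -> Prop) :
  (forall g, G g -> valid F g) -> forall a, derivable G a -> valid F a.
Proof.
move=> hG a; elim=> {a}.
- by move=> a t; apply/valid_pt => V x; rewrite in_truth t.
- by move=> a /hG.
- move=> a b _ /valid_pt ha _ /valid_pt hab; apply/valid_pt => V x.
  by move: (ha V x) (hab V x); rewrite /Imp /= !inE => -> /=; rewrite negbK.
- by move=> s a _ ha V; rewrite truth_subst ha.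
- move=> a b _ /valid_pt h; apply/valid_pt => V x.
  have e : truth V a = truth V b.
    apply/setP => y; move: (h V y); rewrite /Iff /Imp /= !inE.
    by case: (y \in truth V a); case: (y \in truth V b).
  by rewrite /Iff /Imp /= e !inE; case: (x \in _).
Qed.

Lemma valid_imp (F : finframe) a b :
  (forall V : nat -> {set fW F}, truth V a \subset truth V b) -> valid F (Imp a b).
Proof.
move=> h; apply/valid_pt => V x; rewrite /Imp /= !inE.
by case xa: (x \in truth V a) => //=; rewrite negbK (subsetP (h V)).
Qed.

Fixpoint sub (a : form) : seq form :=
  a :: match a with
       | Var _ => [::]
       | Neg b => sub b
       | And b c => sub b ++ sub c
       | Box b => sub b
       end.

Lemma sub_refl a : a \in sub a.
Proof. by case: a => *; rewrite inE eqxx. Qed.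

Lemma sub_trans a b c : b \in sub a -> c \in sub b -> c \in sub a.
Proof.
elim: a => [k|a IH|a1 IH1 a2 IH2|a IH] /=; rewrite in_cons => /orP [/eqP -> //|] //.
- by move=> /IH h /h; rewrite inE => ->; rewrite orbT.
- by rewrite mem_cat => /orP [/IH1 h /h|/IH2 h /h]; rewrite inE mem_cat => ->; rewrite ?orbT.
- by move=> /IH h /h; rewrite inE => ->; rewrite orbT.
Qed.

Section Constr.
Variable G : form -> Prop.
Local Notation D := (derivable G).
Variable f0 : form.
Definition Sig := sub f0.
Local Notation n := (size Sig).

Lemma Sig_neg a : Neg a \in Sig -> a \in Sig.
Proof. by move/sub_trans; apply; rewrite /= inE sub_refl orbT. Qed.
Lemma Sig_andl a b : And a b \in Sig -> a \in Sig.
Proof. by move/sub_trans; apply; rewrite /= inE mem_cat sub_refl orbT. Qed.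
Lemma Sig_andr a b : And a b \in Sig -> b \in Sig.
Proof. by move/sub_trans; apply; rewrite /= inE mem_cat sub_refl !orbT. Qed.
Lemma Sig_box a : Box a \in Sig -> a \in Sig.
Proof. by move/sub_trans; apply; rewrite /= inE sub_refl orbT. Qed.

Definition ind v vb : {ffun 'I_n -> bool} := [ffun i : 'I_n => beval v vb (nth Top Sig i)].
Definition lit (w : {ffun 'I_n -> bool}) :=
  bigAnd [seq (if w i then nth Top Sig i else Neg (nth Top Sig i)) | i : 'I_n <- enum 'I_n].

Lemma beval_lit v vb w : beval v vb (lit w) = (ind v vb == w).
Proof.
rewrite beval_bigAnd all_map; apply/allP/eqP => [H|<-].
- apply/ffunP => i; rewrite ffunE; have := H i (mem_enum _ i) => /=.
  by case: (w i) => //= /negbTE.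
- by move=> i _ /=; rewrite /ind ffunE; case E: (beval v vb (nth Top Sig i)) => /=; rewrite E.
Qed.

Definition consb w : bool :=
  if excluded_middle_informative (D (Neg (lit w))) then false else true.
Lemma consP w : consb w = true <-> ~ D (Neg (lit w)).
Proof. by rewrite /consb; case: excluded_middle_informative. Qed.

Lemma GL g : (forall v vb, consb (ind v vb) -> beval v vb g) -> D g.
Proof.
move=> H.
set bad := [seq Neg (lit w) | w <- enum (predC consb)].
have Db : D (bigAnd bad).
  apply: D_bigAnd => x /mapP [w]; rewrite mem_enum inE => nw ->.
  by apply: NNPP => nd; have := proj2 (consP w) nd; rewrite (negbTE nw).
apply: taut1 Db => v vb /=; rewrite beval_bigAnd.
case: (boolP (consb (ind v vb))) => c; first by rewrite H // andbF.
have m : Neg (lit (ind v vb)) \in bad by apply/mapP; exists (ind v vb); rewrite ?mem_enum ?inE.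
case E: (all _ bad) => //=; move/allP: E => /(_ _ m) /=.
by rewrite beval_lit eqxx.
Qed.

Lemma GL2 w g : consb w -> D g -> exists v vb, ind v vb = w /\ beval v vb g.
Proof.
move=> /consP c dg; apply: NNPP => ne; apply: c; apply: taut1 dg => v vb /=.
case Eg: (beval v vb g) => //=; rewrite beval_lit.
case E: (ind v vb == w) => //=; exfalso; apply: ne; exists v, vb; split => //.
exact/eqP.
Qed.

Definition ev (w : {ffun 'I_n -> bool}) a : bool :=
  if @insub _ (fun i => i < n) 'I_n (index a Sig) is Some i then w i else false.

Lemma ev_ind v vb a : a \in Sig -> ev (ind v vb) a = beval v vb a.
Proof.
move=> aS; rewrite /ev; case: insubP => [i _ vi|]; last by rewrite index_mem aS.
by rewrite ffunE vi nth_index.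
Qed.

Definition W : finType := {w : {ffun 'I_n -> bool} | consb w}.
Definition br a : {set W} := [set x : W | ev (val x) a].

Lemma cons_ex (x : W) : exists v vb, ind v vb = val x.
Proof. have [v [vb [e _]]] := GL2 (valP x) (DTop G); by exists v, vb. Qed.

Lemma ev_neg (x : W) a : Neg a \in Sig -> ev (val x) (Neg a) = ~~ ev (val x) a.
Proof.
move=> h; have [v [vb <-]] := cons_ex x.
by rewrite !ev_ind //; apply: Sig_neg h.
Qed.

Lemma ev_and (x : W) a b : And a b \in Sig -> ev (val x) (And a b) = ev (val x) a && ev (val x) b.
Proof.
move=> h; have [v [vb <-]] := cons_ex x.
by rewrite !ev_ind //; [apply: Sig_andr h|apply: Sig_andl h].
Qed.

Lemma sub_der a b : a \in Sig -> b \in Sig -> br a \subset br b -> D (Imp a b).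
Proof.
move=> aS bS /subsetP H; apply: GL => v vb c.
move: (H (exist _ (ind v vb) c)); rewrite !inE /= !ev_ind //.
by case: (beval v vb a) => //= ->.
Qed.

Lemma eq_der a b : a \in Sig -> b \in Sig -> br a = br b -> D (Iff a b).
Proof.
move=> aS bS e.
have h1 : D (Imp a b) by apply: sub_der => //; rewrite e.
have h2 : D (Imp b a) by apply: sub_der => //; rewrite e.
by apply: (taut2 _ h1 h2); taut.
Qed.

Lemma der_sub a b : a \in Sig -> b \in Sig -> D (Imp a b) -> br a \subset br b.
Proof.
move=> aS bS d; apply/subsetP => x; rewrite !inE.
have [v [vb [E h]]] := GL2 (valP x) d; move: h; rewrite /= -E !ev_ind //.
by case: (beval v vb a); case: (beval v vb b).
Qed.

Lemma der_eq a b : a \in Sig -> b \in Sig -> D (Iff a b) -> br a = br b.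
Proof.
move=> aS bS d; apply/eqP; rewrite eqEsubset; apply/andP; split; apply: der_sub => //.
- by apply: taut1 d; taut.
- by apply: taut1 d; taut.
Qed.


Definition isb (X : {set W}) a := (Box a \in Sig) && (X == br a).
Definition Sb X := has (isb X) Sig.
Definition chosen X := nth Top Sig (find (isb X) Sig).

Lemma chosenP X : Sb X -> [/\ chosen X \in Sig, Box (chosen X) \in Sig & X = br (chosen X)].
Proof.
move=> h; have := nth_find Top h; rewrite /isb -/(chosen X) => /andP [b /eqP e]; split => //.
by apply: mem_nth; rewrite -has_find.
Qed.

Lemma Sb_br a : a \in Sig -> Box a \in Sig -> Sb (br a).
Proof. by move=> aS bS; apply/hasP; exists a => //; rewrite /isb bS eqxx. Qed.

Definition Bx X := br (Box (chosen X)).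

Lemma Bx_br a : a \in Sig -> Box a \in Sig -> Bx (br a) = br (Box a).
Proof.
move=> aS bS; have [cS bcS e] := chosenP (Sb_br aS bS).
rewrite /Bx; apply: der_eq => //; apply: d_re; apply: eq_der => //.
Qed.

Definition isb2 (X : {set W}) a := (Box a \in Sig) && (X == br (Box a)).
Definition Sb2 X := has (isb2 X) Sig.
Definition Sp X := Sb X || Sb2 X.
Definition gg X := if Sb X then Bx X else X.

Lemma Sb2P X : Sb2 X -> exists c, [/\ c \in Sig, Box c \in Sig & X = br (Box c)].
Proof. by move/hasP => [c cS /andP [bS /eqP e]]; exists c. Qed.

Lemma Sp_br a : a \in Sig -> Box a \in Sig -> Sp (br a).
Proof. by move=> aS bS; rewrite /Sp Sb_br. Qed.

Lemma gg_br a : a \in Sig -> Box a \in Sig -> gg (br a) = br (Box a).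
Proof. by move=> aS bS; rewrite /gg Sb_br // Bx_br. Qed.

Hypothesis H4 : D ax4.

Lemma repP X : Sp X -> exists d g, [/\ d \in Sig, g \in Sig, X = br d, gg X = br g & D (Imp g (Box d))].
Proof.
rewrite /Sp /gg; case h: (Sb X) => /=.
- have [cS bS e] := chosenP h; exists (chosen X), (Box (chosen X)); split => //.
  exact: Dimp_refl.
- move/Sb2P => [c [cS bS e]]; exists (Box c), (Box c); split => //.
  exact: D4.
Qed.

Lemma gg_Sp X : Sp X -> Sp (gg X).
Proof.
rewrite /gg; case h: (Sb X) => // _.
have [cS bS e] := chosenP h; rewrite /Sp; apply/orP; right.
by apply/hasP; exists (chosen X) => //; rewrite /isb2 bS /Bx eqxx.
Qed.

Lemma gg_4 X : Sp X -> gg X \subset gg (gg X).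
Proof.
rewrite /gg; case h: (Sb X) => _ /=; last by rewrite h.
have [cS bS e] := chosenP h.
case h2: (Sb (Bx X)) => //.
have [cS' bS' e'] := chosenP h2.
apply: (@der_sub (Box (chosen X)) (Box (chosen (Bx X)))) => //.
have i1 : D (Iff (chosen (Bx X)) (Box (chosen X))) by apply: eq_der => //; rewrite -e'.
have i2 := d_re i1.
apply: (taut2 _ (D4 H4 (chosen X)) i2); taut.
Qed.

Lemma gg_T (HT : D axT) X : Sp X -> gg X \subset X.
Proof.
rewrite /gg; case h: (Sb X) => _ //.
have [cS bS e] := chosenP h; rewrite {2}e /Bx; apply: der_sub => //.
exact: DT.
Qed.

Hypothesis nD : ~ D f0.

Lemma refut_pt : exists x : W, ~~ ev (val x) f0.
Proof.
apply: NNPP => h; apply: nD; apply: GL => v vb c.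
rewrite -ev_ind ?sub_refl //; apply: NNPP => nb; apply: h.
by exists (exist _ (ind v vb) c) => /=; apply/negP.
Qed.

Lemma Hne : 0 < #|W|.
Proof. by have [x _] := refut_pt; apply/card_gt0P; exists x. Qed.

Section Frame.
Variable box : {set W} -> {set W}.
Hypothesis agree : forall a, a \in Sig -> Box a \in Sig -> box (br a) = br (Box a).

Definition Fr := FinFrame box Hne.

Lemma truth_lem a : a \in Sig -> @truth Fr (fun k => br (Var k)) a = br a.
Proof.
elim: a => [k|a IH|a IHa b IHb|a IH] //= h.
- rewrite IH; last exact: Sig_neg h.
  by apply/setP => x; rewrite !inE ev_neg.
- rewrite IHa ?IHb; [|exact: Sig_andr h|exact: Sig_andl h].
  by apply/setP => x; rewrite !inE ev_and.
- by rewrite IH ?agree //; exact: Sig_box h.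
Qed.

Lemma refute : ~ valid Fr f0.
Proof.
move=> /(_ (fun k => br (Var k))); rewrite truth_lem ?sub_refl // => e.
have [x hx] := refut_pt.
by move: (in_setT x); rewrite -e inE (negbTE hx).
Qed.
End Frame.

Definition boxE4 (X : {set W}) : {set W} := if Sp X then gg X else set0.

Lemma agreeE4 a : a \in Sig -> Box a \in Sig -> boxE4 (br a) = br (Box a).
Proof. by move=> aS bS; rewrite /boxE4 Sp_br // gg_br. Qed.

Lemma boxE4_4 X : boxE4 X \subset boxE4 (boxE4 X).
Proof.
rewrite /boxE4; case h: (Sp X); last exact: sub0set.
by rewrite gg_Sp // gg_4.
Qed.

Definition boxS4 (X : {set W}) : {set W} := \bigcup_(Y | Sp Y && (Y \subset X)) gg Y.

Lemma boxS4_mono (X Y : {set W}) : X \subset Y -> boxS4 X \subset boxS4 Y.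
Proof.
move=> s; apply/subsetP => x /bigcupP [Z /andP [sZ zX] xZ].
apply/bigcupP; exists Z => //; rewrite sZ /=; exact: subset_trans zX s.
Qed.

Lemma agreeS4 (HM : D axM) a : a \in Sig -> Box a \in Sig -> boxS4 (br a) = br (Box a).
Proof.
move=> aS bS; apply/eqP; rewrite eqEsubset; apply/andP; split.
- apply/subsetP => x /bigcupP [Y /andP [sY Ya] xY].
  have [d [g [dS gS eY eg dg]]] := repP sY.
  move: xY; rewrite eg; apply/subsetP; apply: der_sub => //.
  apply: Dtrans dg _; apply: Dmono => //; apply: sub_der => //; by rewrite -eY.
- apply/subsetP => x xb; apply/bigcupP; exists (br a); first by rewrite Sp_br ?subxx.
  by rewrite gg_br.
Qed.

Lemma boxS4_T (HT : D axT) X : boxS4 X \subset X.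
Proof.
apply/subsetP => x /bigcupP [Y /andP [sY YX] xY].
by apply: (subsetP YX); apply: (subsetP (gg_T HT sY)).
Qed.

Lemma boxS4_4 X : boxS4 X \subset boxS4 (boxS4 X).
Proof.
apply/subsetP => x /bigcupP [Y /andP [sY YX] xY].
apply/bigcupP; exists (gg Y).
- rewrite gg_Sp //=; apply/subsetP => y yY; apply/bigcupP; exists Y => //.
  by rewrite sY.
- exact: (subsetP (gg_4 sY)).
Qed.

Definition boxK4 (X : {set W}) : {set W} := \bigcup_(I : {set {set W}} | [&& I != set0, [forall Y in I, Sp Y]
   & \bigcap_(Y in I) Y \subset X]) \bigcap_(Y in I) gg Y.

Lemma boxK4_mono (X Y : {set W}) : X \subset Y -> boxK4 X \subset boxK4 Y.
Proof.
move=> s; apply/subsetP => x /bigcupP [I /and3P [n0 sI IX] xI].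
apply/bigcupP; exists I => //; rewrite n0 sI /=; exact: subset_trans IX s.
Qed.

Lemma boxK4_C (X Y : {set W}) : boxK4 X :&: boxK4 Y \subset boxK4 (X :&: Y).
Proof.
apply/subsetP => x; rewrite inE => /andP [/bigcupP [I /and3P [n0 sI IX] xI] /bigcupP [J /and3P [n0' sJ JY] xJ]].
apply/bigcupP; exists (I :|: J).
- apply/and3P; split.
  + case/set0Pn: n0 => Z ZI; apply/set0Pn; exists Z; by rewrite inE ZI.
  + apply/forall_inP => Z; rewrite inE => /orP [ZI|ZJ]; [exact: (forall_inP sI)|exact: (forall_inP sJ)].
  + apply/subsetP => y /bigcapP h; rewrite inE; apply/andP; split.
    * apply: (subsetP IX); apply/bigcapP => Z ZI; apply: h; by rewrite inE ZI.
    * apply: (subsetP JY); apply/bigcapP => Z ZJ; apply: h; by rewrite inE ZJ orbT.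
- apply/bigcapP => Z; rewrite inE => /orP [ZI|ZJ].
  + by move/bigcapP: xI; apply.
  + by move/bigcapP: xJ; apply.
Qed.

Lemma boxK4_4 X : boxK4 X \subset boxK4 (boxK4 X).
Proof.
apply/subsetP => x /bigcupP [I /and3P [n0 sI IX] xI].
apply/bigcupP; exists (gg @: I).
- apply/and3P; split.
  + case/set0Pn: n0 => Z ZI; apply/set0Pn; exists (gg Z); exact: imset_f.
  + apply/forall_inP => Z /imsetP [Y YI ->]; apply: gg_Sp; exact: (forall_inP sI).
  + apply/subsetP => y /bigcapP h; apply/bigcupP; exists I; first by rewrite n0 sI.
    apply/bigcapP => Y YI; apply: h; exact: imset_f.
- apply/bigcapP => Z /imsetP [Y YI ->].
  apply: (subsetP (gg_4 (forall_inP sI _ YI))); by move/bigcapP: xI; apply.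
Qed.

Lemma conj_rep (HC : D axC) (l : seq {set W}) : l != [::] -> all Sp l ->
  exists Df Gf : form, [/\ (forall (x : W) v vb, ind v vb = val x -> beval v vb Df = all (fun Y : {set W} => x \in Y) l),
     (forall (x : W) v vb, ind v vb = val x -> beval v vb Gf = all (fun Y : {set W} => x \in gg Y) l)
   & D (Imp Gf (Box Df))].
Proof.
elim: l => [|Y l IH] //= _ /andP [sY sl].
have [d [g [dS gS eY eg dg]]] := repP sY.
case: l IH sl => [|Y' l'] IH sl.
- exists d, g; split => [x v vb E|x v vb E|//]; rewrite /= andbT.
  + by rewrite eY inE -[val x]E ev_ind.
  + by rewrite eg inE -[val x]E ev_ind.
- have [D' [G' [h1 h2 h3]]] := IH isT sl.
  exists (And d D'), (And g G'); split => [x v vb E|x v vb E|].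
  + by rewrite /= (h1 x v vb E) eY inE -[val x]E ev_ind.
  + by rewrite /= (h2 x v vb E) eg inE -[val x]E ev_ind.
  + apply: (taut3 _ dg h3 (DC HC d D')); taut.
Qed.

Lemma agreeK4 (HM : D axM) (HC : D axC) a : a \in Sig -> Box a \in Sig -> boxK4 (br a) = br (Box a).
Proof.
move=> aS bS; apply/eqP; rewrite eqEsubset; apply/andP; split.
- apply/subsetP => x /bigcupP [I /and3P [n0 sI IX] xI].
  have ne : enum I != [::].
    case/set0Pn: n0 => Z ZI; apply/eqP => e; by move: (mem_enum I Z); rewrite e ZI.
  have al : all Sp (enum I) by apply/allP => Z; rewrite mem_enum; exact: (forall_inP sI).
  have [Df [Gf [h1 h2 h3]]] := conj_rep HC ne al.
  have d1 : D (Imp Df a).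
    apply: GL => v vb c; set y : W := exist _ (ind v vb) c.
    rewrite /= (h1 y v vb erefl) -(ev_ind _ _ aS).
    case E: (all _ _) => //=; rewrite negbK.
    have : y \in br a.
      apply: (subsetP IX); apply/bigcapP => Z ZI; move/allP: E; apply; by rewrite mem_enum.
    by rewrite inE.
  have d2 : D (Imp Gf (Box a)) by apply: Dtrans h3 _; exact: Dmono.
  have [v [vb [E h]]] := GL2 (valP x) d2.
  move: h; rewrite /= (h2 x v vb E).
  have -> : all (fun Y => x \in gg Y) (enum I).
    apply/allP => Z; rewrite mem_enum => ZI; by move/bigcapP: xI; apply.
  by rewrite /= negbK inE -E ev_ind.
- apply/subsetP => x xb; apply/bigcupP; exists [set br a].
  + apply/and3P; split.
    * by apply/set0Pn; exists (br a); rewrite inE.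
    * by apply/forall_inP => Z; rewrite inE => /eqP ->; rewrite Sp_br.
    * by apply/subsetP => y /bigcapP; apply; rewrite inE.
  + by apply/bigcapP => Z; rewrite inE => /eqP ->; rewrite gg_br.
Qed.

End Constr.

Lemma E_sound F a : E a -> valid F a.
Proof. by apply: sound => g []. Qed.
Lemma E4_sound F a : valid F ax4 -> E4 a -> valid F a.
Proof. by move=> h4; apply: sound => g [/E_sound|->]. Qed.
Lemma S04_sound F a : valid F ax4 -> valid F axT -> valid F axM -> S04 a -> valid F a.
Proof. by move=> h4 hT hM; apply: sound => g [/(E4_sound h4)|[->|->]]. Qed.
Lemma EMC4_sound F a : valid F ax4 -> valid F axM -> valid F axC -> EMC4 a -> valid F a.
Proof. by move=> h4 hM hC; apply: sound => g [/(E4_sound h4)|[->|->]]. Qed.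

Lemma fmpE4 : fmp E4.
Proof.
exists (fun F => valid F ax4) => f; split => [h F c|h]; first exact: E4_sound c h.
apply: NNPP => nE.
have H4 : E4 ax4 by apply: d_ax; right.
apply: (refute (nD:=nE) (box:=boxE4 (G:=_) (f0:=f)) (@agreeE4 _ f)).
apply: h; apply: valid_imp => V /=; exact: boxE4_4.
Qed.

Lemma fmpS04 : fmp S04.
Proof.
exists (fun F => [/\ valid F ax4, valid F axT & valid F axM]) => f.
split => [h F [c1 c2 c3]|h]; first exact: S04_sound c1 c2 c3 h.
apply: NNPP => nE.
have H4 : S04 ax4 by apply: d_ax; left; apply: d_ax; right.
have HT : S04 axT by apply: d_ax; right; left.
have HM : S04 axM by apply: d_ax; right; right.
apply: (refute (nD:=nE) (box:=boxS4 (G:=_) (f0:=f)) (agreeS4 H4 HM)).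
apply: h; split; apply: valid_imp => V /=.
- exact: boxS4_4.
- exact: boxS4_T.
- by rewrite subsetI !boxS4_mono ?subsetIl ?subsetIr.
Qed.

Lemma fmpEMC4 : fmp EMC4.
Proof.
exists (fun F => [/\ valid F ax4, valid F axM & valid F axC]) => f.
split => [h F [c1 c2 c3]|h]; first exact: EMC4_sound c1 c2 c3 h.
apply: NNPP => nE.
have H4 : EMC4 ax4 by apply: d_ax; left; apply: d_ax; right.
have HM : EMC4 axM by apply: d_ax; right; left.
have HC : EMC4 axC by apply: d_ax; right; right.
apply: (refute (nD:=nE) (box:=boxK4 (G:=_) (f0:=f)) (agreeK4 H4 HM HC)).
apply: h; split; apply: valid_imp => V /=.
- exact: boxK4_4.
- by rewrite subsetI !boxK4_mono ?subsetIl ?subsetIr.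
- exact: boxK4_C.
Qed.

Theorem mainTheorem2 : fmp E4 /\ fmp S04 /\ fmp EMC4.
Proof. by split; [exact: fmpE4|split; [exact: fmpS04|exact: fmpEMC4]]. Qed.
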